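(* Let $d\ge 1$ and $k\ge 2$ be integers. The Hamming graph $H(d,k)$ admits a closed neighborhood balanced $k$-coloring if and only if $d\equiv 1 \pmod{k}$.
   Context: The Hamming graph $H(d,k)$ has vertex set $S^d$ where $S=\{1,2,\dots,k\}$, two $d$-tuples being adjacent iff they differ in exactly one coordinate. For a vertex $v$ of a graph $G$, $N[v]=\{v\}\cup\{u : uv\in E(G)\}$. A closed neighborhood balanced $k$-coloring of $G$ is a map $c: V(G)\to\{1,\dots,k\}$ such that for every vertex $v$ the numbers $|\{u\in N[v] : c(u)=i\}|$, $i=1,\dots,k$, are all equal. *)

(* Defs.v *)
From mathcomp Require Import all_boot.
Set Implicit Arguments. Unset Strict Implicit. Unset Printing Implicit Defensive.

Definition hvert (d k : nat) := {ffun 'I_d -> 'I_k}.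

Definition hadj (d k : nat) (x y : hvert d k) : bool :=
  #|[set i : 'I_d | x i != y i]| == 1.

Definition hclosed_nbhd (d k : nat) (v : hvert d k) : {set hvert d k} :=
  [set u | (u == v) || hadj v u].

Definition cnb_coloring (d k : nat) (c : hvert d k -> 'I_k) : Prop :=
  forall (v : hvert d k) (i j : 'I_k),
    #|[set u in hclosed_nbhd v | c u == i]| = #|[set u in hclosed_nbhd v | c u == j]|.

(* Main.v *)
Require Import Defs.
From mathcomp Require Import all_boot all_algebra zify.
Set Implicit Arguments. Unset Strict Implicit. Unset Printing Implicit Defensive.

Section Count.
Variables (d k : nat).
Definition upd (v : hvert d k) (i : 'I_d) (a : 'I_k) : hvert d k :=
  [ffun j => if j == i then a else v j].

Lemma upd_adj (v : hvert d k) (i : 'I_d) (a : 'I_k) : a != v i -> hadj v (upd v i a).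
Proof.
move=> na; rewrite /hadj; apply/cards1P; exists i; apply/setP=> j.
rewrite !inE /upd ffunE; case: (j =P i) => [->|_]; first by rewrite eq_sym na.
by rewrite eqxx.
Qed.

Lemma adj_upd (v u : hvert d k) : hadj v u -> exists i, u i != v i /\ u = upd v i (u i).
Proof.
rewrite /hadj; move=> H; have [i Hi] := cards1P H; exists i; split.
  have : i \in [set i0 | v i0 != u i0] by rewrite Hi inE.
  by rewrite inE eq_sym.
apply/ffunP=> j; rewrite /upd ffunE; case: (j =P i) => [->//|/eqP nj].
have : j \notin [set i0 | v i0 != u i0] by rewrite Hi inE.
by rewrite inE negbK => /eqP.
Qed.

Lemma nbhd_count (P : pred (hvert d k)) (v : hvert d k) :
  #|[set u in hclosed_nbhd v | P u]| =
  P v + \sum_(i < d) #|[set a : 'I_k | (a != v i) && P (upd v i a)]|.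
Proof.
pose D := [set p : 'I_d * 'I_k | (p.2 != v p.1) && P (upd v p.1 p.2)].
have nadj : ~~ hadj v v.
  rewrite /hadj; apply/negP => /eqP.
  have -> : [set i | v i != v i] = set0 by apply/setP=> i; rewrite !inE eqxx.
  by rewrite cards0.
have -> : [set u in hclosed_nbhd v | P u] =
   [set u | (u == v) && P u] :|: [set upd v p.1 p.2 | p in D].
  apply/setP=> u; rewrite !inE; apply/idP/idP.
    case/andP => /orP [/eqP ->|Ha] Pu; first by rewrite eqxx Pu.
    apply/orP; right; have [i [ni eu]] := adj_upd Ha.
    by apply/imsetP; exists (i, u i); rewrite // inE /= ni -eu.
  case/orP => [/andP [/eqP -> ->]|]; first by rewrite eqxx.
  case/imsetP => [[i a]]; rewrite inE /= => /andP [na Pa] ->.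
  by rewrite Pa upd_adj // orbT.
have inj : {in D &, injective (fun p : 'I_d * 'I_k => upd v p.1 p.2)}.
  move=> [i a] [i' a']; rewrite !inE /= => /andP [na _] /andP [na' _] e.
  have ei : i = i'.
    apply/eqP; apply/negPn/negP => nii.
    have := congr1 (fun f : hvert d k => f i) e; rewrite /= /upd !ffunE eqxx.
    by rewrite (negbTE nii) => ea; rewrite ea eqxx in na.
  subst i'; have := congr1 (fun f : hvert d k => f i) e.
  by rewrite /= /upd !ffunE eqxx => ->.
rewrite cardsU.
have -> : [set u | (u == v) && P u] :&: [set upd v p.1 p.2 | p in D] = set0.
  apply/setP=> u; rewrite !inE; apply/negP => /andP [/andP [/eqP -> _]].
  case/imsetP => [[i a]]; rewrite inE /= => /andP [na _] ev.
  by move: nadj; rewrite {2}ev upd_adj.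
rewrite cards0 subn0 card_in_imset //; congr (_ + _).
  case Pv: (P v).
    rewrite /= -(cards1 v); apply: eq_card => u; rewrite !inE.
    by case: eqP => // ->.
  rewrite /=; apply/eqP; rewrite cards_eq0; apply/eqP/setP=> u; rewrite !inE.
  by case: eqP => // ->; rewrite Pv.
have -> : \sum_(i < d) #|[set a : 'I_k | (a != v i) && P (upd v i a)]| =
   \sum_(i < d) \sum_(a : 'I_k | (a != v i) && P (upd v i a)) 1.
  by apply: eq_bigr => i _; rewrite -sum1_card; apply: eq_bigl => a; rewrite inE.
rewrite pair_big_dep /= -sum1_card; apply: eq_bigl => p; by rewrite inE.
Qed.
End Count.

Lemma nbhd_card d k (v : hvert d k) : #|hclosed_nbhd v| = 1 + d * k.-1.
Proof.
have -> : #|hclosed_nbhd v| = #|[set u in hclosed_nbhd v | predT u]|.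
  by apply: eq_card => u; rewrite !inE andbT.
rewrite nbhd_count /=; congr (_ + _).
rewrite -[d in RHS]card_ord -sum_nat_const; apply: eq_bigr => i _.
rewrite -[k in RHS](card_ord k) -(cardsC1 (v i)); apply: eq_card => a; by rewrite !inE andbT.
Qed.

Lemma necessity d k (hk : 2 <= k) (c : hvert d k -> 'I_k) :
  cnb_coloring c -> d = 1 %[mod k].
Proof.
move=> H.
pose v : hvert d k := [ffun _ => Ordinal (ltnW hk)].
pose j0 : 'I_k := Ordinal (ltnW hk).
have e : #|hclosed_nbhd v| = k * #|[set u in hclosed_nbhd v | c u == j0]|.
  rewrite -sum1_card (partition_big c predT) //=.
  rewrite (eq_bigr (fun _ => #|[set u in hclosed_nbhd v | c u == j0]|)).
    by rewrite sum_nat_const card_ord.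
  move=> j _; rewrite -(H v j j0) -sum1_card; apply: eq_bigl => u; by rewrite !inE.
rewrite nbhd_card in e.
set n := #|_| in e.
have e3 : d * k = d * k.-1 + d by rewrite -mulnSr prednK //; lia.
have e2 : k * n + d = d * k + 1 by rewrite e3 -e; lia.
have := congr1 (modn^~ k) e2.
by rewrite mulnC !modnMDl.
Qed.
Import GRing.Theory.

Lemma sum_split (d t A B : nat) : t <= d ->
  \sum_(i < d) (if i < t then A else B) = t * A + (d - t) * B.
Proof.
move=> td; rewrite -(big_mkord xpredT (fun i => if i < t then A else B)).
rewrite (@big_cat_nat _ _ _ t) //=.
rewrite (eq_big_nat _ _ (F2 := fun _ => A)); last by move=> i /andP [_ ->].
rewrite (eq_big_nat _ _ (F2 := fun _ => B) (m := t)); last first.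
  by move=> i /andP [ti _]; rewrite ltnNge ti.
by rewrite !sum_nat_const_nat subn0 mulnC [(d - t) * _]mulnC.
Qed.

Section Suff.
Variables (d k' t : nat).
Local Notation k := k'.+2.
Definition col (x : hvert d k) : 'I_k := (\sum_(i < d | (i < t)%N) x i)%R.

Lemma col_upd (v : hvert d k) i a :
  col (upd v i a) = if i < t then (col v - v i + a)%R else col v.
Proof.
rewrite /col; case: ifP => it.
  rewrite (bigD1 i) //= [in RHS](bigD1 i) //= /upd ffunE eqxx.
  rewrite (eq_bigr (fun j => v j)); last first.
    move=> j /andP [_ nj]; rewrite ffunE; by rewrite (negbTE nj).
  by rewrite [(v i + _)%R]addrC addrK addrC.
apply: eq_bigr => j jt; rewrite /upd ffunE; case: (j =P i) => // ej.
by rewrite ej it in jt.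
Qed.

Lemma count_i (v : hvert d k) (i : 'I_d) (j : 'I_k) :
  #|[set a : 'I_k | (a != v i) && (col (upd v i a) == j)]| =
  if i < t then (j != col v : nat) else (col v == j) * k'.+1.
Proof.
case: ifP => it.
  have E : forall a, (col (upd v i a) == j) = (a == j - (col v - v i))%R.
    by move=> a; rewrite col_upd it [RHS]eq_sym subr_eq [(_ + a)%R]addrC eq_sym.
  case: (j =P col v) => [ej|nej] /=.
    apply/eqP; rewrite cards_eq0; apply/eqP/setP => a; rewrite !inE E ej.
    rewrite opprB addrC subrK; by case: (a =P v i).
  rewrite -(cards1 (j - (col v - v i))%R); apply: eq_card => a.
  rewrite !inE E; case: (a =P _) => [->|]; rewrite ?andbF ?andbT //.
  apply/negP => /eqP h; apply: nej.
  by rewrite -(subrK (col v - v i)%R j) h addrC subrK.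
case: (col v =P j) => [ej|nej] /=.
  rewrite mul1n; transitivity #|[set~ v i]|; last by rewrite cardsC1 card_ord.
  by apply: eq_card => a; rewrite !inE col_upd it ej eqxx andbT.
apply/eqP; rewrite mul0n cards_eq0; apply/eqP/setP => a.
by rewrite !inE col_upd it; move/eqP/negbTE: nej => ->; rewrite andbF.
Qed.
End Suff.

Lemma sufficiency d k' m : d = m * k'.+2 + 1 ->
  exists c : hvert d k'.+2 -> 'I_k'.+2, cnb_coloring c.
Proof.
move=> hd; pose t := 1 + m * k'.+1.
have td : t <= d by rewrite hd /t; nia.
suff H : forall (v : hvert d k'.+2) (j : 'I_k'.+2), #|[set u in hclosed_nbhd v | col t u == j]| = t.
  by exists (col t) => v i j; rewrite !H.
move=> v j.
rewrite (nbhd_count (fun u => col t u == j)) /=.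
rewrite (eq_bigr _ (fun i _ => count_i t v i j)) sum_split //.
case: (col t v =P j) => [->|/eqP nj]; rewrite ?eqxx /= ?nj /=.
  rewrite /t hd; nia.
rewrite eq_sym nj /=; lia.
Qed.

Theorem theorem2p5 (d k : nat) (hd : 1 <= d) (hk : 2 <= k) :
  (exists c : hvert d k -> 'I_k, cnb_coloring c) <-> d = 1 %[mod k].
Proof.
split; first by case=> c; exact: necessity.
move=> e; case: k hk e => [|[|k']] // _ e.
apply: (@sufficiency d k' (d %/ k'.+2)).
by rewrite {1}(divn_eq d k'.+2) e.
Qed.
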